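(* Let $\mathbf{k}$ be a reproducing kernel with RKHS $\mathcal{H}_{\mathbf{k}}$, let $\mathcal{X}_{\mathrm{in}}$ be a finite input set and $\mathcal{X}_{\mathrm{out}}\subseteq\mathcal{X}_{\mathrm{in}}$ a random output, let $\mathcal{F}\subset\mathcal{H}_{\mathbf{k}}$, $\varepsilon\ge0$, and $\delta'\in(0,1)$. Let $a:=\sup_{f\in\mathcal{F}}\|f\|_{\mathbf{k}}$, $\mathbb{B}_{\mathcal{F}}:=\{f\in\mathcal{H}_{\mathbf{k}}:\|f\|_{\mathbf{k}}\le a\}$, and let $\mathcal{C}_{\varepsilon,\mathcal{F}}$ be a set of minimum cardinality satisfying $\mathcal{C}_{\varepsilon,\mathcal{F}}\subset\mathbb{B}_{\mathcal{F}}$ and $\sup_{f\in\mathcal{F}}\min_{f'\in\mathcal{C}_{\varepsilon,\mathcal{F}}}\max_{x\in\mathcal{X}_{\mathrm{in}}}|f(x)-f'(x)|\le\varepsilon$. If $(\mathbb{P}_{\mathrm{in}}-\mathbb{P}_{\mathrm{out}})\mathbf{k}$ is $(\mathbf{k},\nu)$-sub-Gaussian on an event $\mathcal{E}$, then $$\mathbb{P}\Big(\mathcal{E}\cap\Big\{\sup_{f\in\mathcal{F}}(\mathbb{P}_{\mathrm{in}}-\mathbb{P}_{\mathrm{out}})f>2\varepsilon+\nu a\sqrt{2\log(|\mathcal{C}_{\varepsilon,\mathcal{F}}|/\delta')}\Big\}\Big)\le\delta',$$ i.e. on $\mathcal{E}$, $\sup_{f\in\mathcal{F}}(\mathbb{P}_{\mathrm{in}}-\mathbb{P}_{\mathrm{out}})f\le2\varepsilon+\nu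 a\sqrt{2\log(|\mathcal{C}_{\varepsilon,\mathcal{F}}|/\delta')}$ with probability at least $1-\delta'$.
   Context: $\mathbb{P}_{\mathrm{in}},\mathbb{P}_{\mathrm{out}}$ are the empirical distributions of $\mathcal{X}_{\mathrm{in}},\mathcal{X}_{\mathrm{out}}$; $(\mathbb{P}_{\mathrm{in}}-\mathbb{P}_{\mathrm{out}})f:=\mathbb{E}_{\mathbb{P}_{\mathrm{in}}}f-\mathbb{E}_{\mathbb{P}_{\mathrm{out}}}f$ and $(\mathbb{P}_{\mathrm{in}}-\mathbb{P}_{\mathrm{out}})\mathbf{k}:=\frac{1}{|\mathcal{X}_{\mathrm{in}}|}\sum_{x\in\mathcal{X}_{\mathrm{in}}}\mathbf{k}(x,\cdot)-\frac1{|\mathcal{X}_{\mathrm{out}}|}\sum_{x\in\mathcal{X}_{\mathrm{out}}}\mathbf{k}(x,\cdot)$. A random $\phi\in\mathcal{H}_{\mathbf{k}}$ is $(\mathbf{k},\nu)$-sub-Gaussian on $\mathcal{E}$ if $\nu>0$ and $\mathbb{E}[\exp(\langle f,\phi\rangle_{\mathbf{k}})\mathbf{1}_{\mathcal{E}}]\le\exp(\frac{\nu^2}{2}\|f\|_{\mathbf{k}}^2)$ for all $f\in\mathcal{H}_{\mathbf{k}}$. *)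

(* Defs.v *)
From HB Require Import structures.
From mathcomp Require Import all_boot all_order all_algebra finmap.
From mathcomp Require Import all_classical all_reals all_analysis.
Set Implicit Arguments. Unset Strict Implicit. Unset Printing Implicit Defensive.
Import Order.TTheory GRing.Theory Num.Theory.
Local Open Scope classical_set_scope.
Local Open Scope fset_scope.
Local Open Scope ring_scope.

Record RKHS (R : realType) (X : Type) := {
  Hspace : set (X -> R);
  ip : (X -> R) -> (X -> R) -> R;
  kern : X -> X -> R;
  Hspace0 : Hspace (fun=> 0);
  HspaceD : forall f g, Hspace f -> Hspace g -> Hspace (fun x => f x + g x);
  HspaceZ : forall (a : R) f, Hspace f -> Hspace (fun x => a * f x);
  ip_sym : forall f g, Hspace f -> Hspace g -> ip f g = ip g f;
  ip_linear : forall (a : R) f g h, Hspace f -> Hspace g -> Hspace h ->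
    ip (fun x => a * f x + g x) h = a * ip f h + ip g h;
  ip_ge0 : forall f, Hspace f -> 0 <= ip f f;
  ip_eq0 : forall f, Hspace f -> ip f f = 0 -> f = (fun=> 0);
  Hcomplete : forall u : nat -> (X -> R), (forall n, Hspace (u n)) ->
    (forall e : R, 0 < e -> exists N : nat, forall m n : nat, (N <= m)%N -> (N <= n)%N ->
        Num.sqrt (ip (fun x => u m x - u n x) (fun x => u m x - u n x)) < e) ->
    exists2 g, Hspace g & forall e : R, 0 < e -> exists N : nat, forall n : nat, (N <= n)%N ->
        Num.sqrt (ip (fun x => u n x - g x) (fun x => u n x - g x)) < e;
  kern_in : forall x, Hspace (kern x);
  reproducing : forall f x, Hspace f -> ip f (kern x) = f x
}.

Definition Hnorm (R : realType) (X : Type) (K : RKHS R X) (f : X -> R) : R :=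
  Num.sqrt (ip K f f).

Definition emp (R : realType) (X : choiceType) (S : {fset X}) (f : X -> R) : R :=
  (#|` S|%:R)^-1 * \sum_(x <- S) f x.

Definition emp_diff (R : realType) (X : choiceType) (Sin Sout : {fset X}) (f : X -> R) : R :=
  emp Sin f - emp Sout f.

Definition emp_diff_kernel (R : realType) (X : choiceType) (K : RKHS R X)
    (Sin Sout : {fset X}) : X -> R :=
  fun y => emp Sin (fun x => kern K x y) - emp Sout (fun x => kern K x y).

Definition subgaussian_on (R : realType) (X : Type) (K : RKHS R X)
    (d : measure_display) (T : measurableType d) (P : probability T R)
    (phi : T -> (X -> R)) (nu : R) (E : set T) : Prop :=
  0 < nu /\
  forall f, Hspace K f ->
    (\int[P]_(w in E) (expR (ip K f (phi w)))%:E
      <= (expR (nu ^+ 2 / 2 * Hnorm K f ^+ 2))%:E)%E.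

Definition sup_norm (R : realType) (X : Type) (K : RKHS R X) (F : set (X -> R)) : \bar R :=
  ereal_sup [set (Hnorm K f)%:E | f in F].

Definition is_cover (R : realType) (X : choiceType) (K : RKHS R X) (Xin : {fset X})
    (F : set (X -> R)) (eps : R) (C : {fset (X -> R)}) : Prop :=
  (forall c, c \in C -> Hspace K c /\ ((Hnorm K c)%:E <= sup_norm K F)%E) /\
  (forall f, F f -> exists2 c, c \in C & forall x, x \in Xin -> `|f x - c x| <= eps).

Definition is_min_cover (R : realType) (X : choiceType) (K : RKHS R X) (Xin : {fset X})
    (F : set (X -> R)) (eps : R) (C : {fset (X -> R)}) : Prop :=
  is_cover K Xin F eps C /\
  forall C' : {fset (X -> R)}, is_cover K Xin F eps C' -> (#|` C| <= #|` C'|)%N.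

(* Main.v *)
Require Import Defs.
From HB Require Import structures.
From mathcomp Require Import all_boot all_order all_algebra finmap.
From mathcomp Require Import all_classical all_reals all_analysis.
From mathcomp Require Import lra ring.
Import Order.TTheory GRing.Theory Num.Theory.
Local Open Scope classical_set_scope.
Local Open Scope ring_scope.
Set Implicit Arguments. Unset Strict Implicit.
Lemma meas_of (d : measure_display) (T : measurableType d) (X : choiceType)
  (Xin : {fset X}) (Xout : T -> {fset X})
  (Xout_sub : forall w, (Xout w `<=` Xin)%fset)
  (Xout_meas : forall S : {fset X}, measurable [set w | Xout w = S])
  (Q : {fset X} -> Prop) : measurable [set w | Q (Xout w)].
Proof.
have H : forall s : seq {fset X}, measurable [set w | Xout w \in s /\ Q (Xout w)].
  elim => [|S s IH].
    rewrite (_ : [set w | _] = set0); first exact: measurable0.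
    by apply/seteqP; split => w //=; case; rewrite in_nil.
  rewrite (_ : [set w | _] = ([set w | Xout w = S] `&` [set _ | Q S])
      `|` [set w | Xout w \in s /\ Q (Xout w)]).
    apply: measurableU => //; apply: measurableI => //.
    case: (pselect (Q S)) => h.
      by rewrite (_ : [set _ | Q S] = setT); [exact: measurableT| apply/seteqP; split].
    by rewrite (_ : [set _ | Q S] = set0); [exact: measurable0| apply/seteqP; split].
  apply/seteqP; split => w /=.
    by case; rewrite in_cons => /orP [/eqP -> | hs] hq; [left | right].
  case => [[-> hq] | [hs hq]]; split => //; by rewrite in_cons ?eqxx ?hs ?orbT.
rewrite (_ : [set w | Q (Xout w)] =
   [set w | Xout w \in (fpowerset Xin : seq _) /\ Q (Xout w)]); first exact: H.
apply/seteqP; split => w /=; last by case.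
move=> hq; split => //.
have : Xout w \in fpowerset Xin by rewrite fpowersetE.
by [].
Qed.

Lemma measfun_of (d : measure_display) (T : measurableType d) (X : choiceType)
  (Xin : {fset X}) (Xout : T -> {fset X})
  (Xout_sub : forall w, (Xout w `<=` Xin)%fset)
  (Xout_meas : forall S : {fset X}, measurable [set w | Xout w = S])
  (d' : measure_display) (U : sigmaRingType d') (h : {fset X} -> U)
  (D : set T) : measurable D -> measurable_fun D (fun w => h (Xout w)).
Proof.
move=> mD _ Y mY; apply: measurableI => //.
have := meas_of Xout_sub Xout_meas (fun S => Y (h S)).
by congr measurable; apply/seteqP; split.
Qed.

Lemma union_bound (d : measure_display) (T : measurableType d) (R : realType)
  (P : probability T R) (I : eqType) (s : seq I) (G : I -> set T) (D : set T) :
  measurable D -> (forall i, measurable (G i)) ->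
  (forall w, D w -> exists2 i, i \in s & G i w) ->
  (P D <= \sum_(i <- s) P (G i))%E.
Proof.
elim: s D => [|i s IH] D mD mG HD.
  rewrite big_nil (_ : D = set0) ?measure0 //.
  by apply/seteqP; split => w // /HD [j]; rewrite in_nil.
rewrite big_cons.
apply: (@le_trans _ _ (P (G i `|` (D `\` G i)))).
  apply: le_measure; rewrite ?inE //.
    by apply: measurableU => //; exact: measurableD.
  by move=> w Dw; case: (pselect (G i w)) => h; [left | right].
apply: le_trans (measureU2 _ (mG i) (measurableD mD (mG i))) _.
apply: leeD2l; apply: IH => //; first exact: measurableD.
move=> w [Dw nG]; case: (HD w Dw) => j; rewrite in_cons => /orP [/eqP -> // | js] Gj.
by exists j.
Qed.
Lemma ip0l (R : realType) (X : Type) (K : RKHS R X) h :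
  Hspace K h -> ip K (fun=> 0) h = 0.
Proof.
move=> Hh; have := ip_linear 1 (Hspace0 K) (Hspace0 K) Hh.
rewrite (_ : (fun x => 1 * 0 + 0) = fun=> 0); last first.
  by apply: funext => x; rewrite mulr0 addr0.
by rewrite mul1r => e; lra.
Qed.

Lemma ip_linr (R : realType) (X : Type) (K : RKHS R X) a f g h :
  Hspace K f -> Hspace K g -> Hspace K h ->
  ip K h (fun x => a * f x + g x) = a * ip K h f + ip K h g.
Proof.
move=> Hf Hg Hh.
rewrite ip_sym //; last by apply: HspaceD => //; exact: HspaceZ.
by rewrite ip_linear // (ip_sym Hh Hf) (ip_sym Hh Hg).
Qed.

Lemma ipZl (R : realType) (X : Type) (K : RKHS R X) a f h :
  Hspace K f -> Hspace K h -> ip K (fun x => a * f x) h = a * ip K f h.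
Proof.
move=> Hf Hh; have := ip_linear a Hf (Hspace0 K) Hh.
rewrite ip0l // addr0 (_ : (fun x => a * f x + 0) = fun x => a * f x) //.
by apply: funext => x; rewrite addr0.
Qed.

Lemma ipZr (R : realType) (X : Type) (K : RKHS R X) a f h :
  Hspace K f -> Hspace K h -> ip K h (fun x => a * f x) = a * ip K h f.
Proof.
move=> Hf Hh; rewrite ip_sym //; last exact: HspaceZ.
by rewrite ipZl // ip_sym.
Qed.

Lemma ip_sum (R : realType) (X : Type) (K : RKHS R X) c (w : X -> R) (s : seq X) :
  Hspace K c ->
  Hspace K (fun y => \sum_(x <- s) w x * kern K x y) /\
  ip K c (fun y => \sum_(x <- s) w x * kern K x y) = \sum_(x <- s) w x * c x.
Proof.
move=> Hc; elim: s => [|x s [IH1 IH2]].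
  rewrite (_ : (fun y => _) = fun=> 0); last by apply: funext => y; rewrite big_nil.
  split; first exact: Hspace0.
  by rewrite big_nil ip_sym ?ip0l //; exact: Hspace0.
rewrite (_ : (fun y => \sum_(x0 <- x :: s) _) =
   fun y => w x * kern K x y + \sum_(x0 <- s) w x0 * kern K x0 y); last first.
  by apply: funext => y; rewrite big_cons.
split; first by apply: HspaceD => //; apply: HspaceZ; exact: kern_in.
rewrite (ip_linr (w x) (kern_in K x) IH1 Hc) big_cons IH2.
by rewrite reproducing.
Qed.

Lemma ip_phi (R : realType) (X : choiceType) (K : RKHS R X) c (Xin S : {fset X}) :
  Hspace K c -> Hspace K (emp_diff_kernel K Xin S) /\
  ip K c (emp_diff_kernel K Xin S) = emp_diff Xin S c.
Proof.
move=> Hc.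
have [H1 E1] := ip_sum (fun=> (#|` Xin|%:R)^-1) Xin Hc.
have [H2 E2] := ip_sum (fun=> - (#|` S|%:R)^-1) S Hc.
have -> : emp_diff_kernel K Xin S = fun y => 1 * (fun y => \sum_(x <- Xin)
   (fun=> (#|` Xin|%:R)^-1) x * kern K x y) y +
   (fun y => \sum_(x <- S) (fun=> - (#|` S|%:R)^-1) x * kern K x y) y.
  apply: funext => y; rewrite /emp_diff_kernel /emp /= mul1r -!mulr_sumr.
  by rewrite mulNr.
split; first by apply: HspaceD => //; exact: HspaceZ.
rewrite (ip_linr 1 H1 H2 Hc) E1 E2 mul1r /emp_diff /emp -!mulr_sumr.
by rewrite mulNr.
Qed.

Lemma emp_close (R : realType) (X : choiceType) (S : {fset X}) (f c : X -> R) (eps : R) :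
  0 <= eps -> (forall x, x \in S -> `|f x - c x| <= eps) ->
  emp S f - emp S c <= eps /\ emp S c - emp S f <= eps.
Proof.
move=> he H.
have key : forall g1 g2 : X -> R, (forall x, x \in S -> g1 x - g2 x <= eps) ->
    emp S g1 - emp S g2 <= eps.
  move=> g1 g2 Hg; rewrite /emp -mulrBr -sumrB.
  have : \sum_(x <- S) (g1 x - g2 x) <= eps *+ #|` S|.
    rewrite big_seq (le_trans (ler_sum _ (G := fun=> eps) _)) //.
    by rewrite -big_seq big_const_seq count_predT iter_addr addr0.
  case: (posnP #|` S|) => [-> _| hn hs].
    by rewrite invr0 mul0r.
  have n0 : (#|` S|%:R : R) != 0 by rewrite pnatr_eq0 -lt0n.
  rewrite -[leRHS](mulKf n0).
  by rewrite ler_wpM2l ?invr_ge0 // mulr_natl.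
split; apply: key => x /H; [| rewrite distrC]; exact: le_trans (ler_norm _).
Qed.

Unset Implicit Arguments.

Theorem lemmaC3 (R : realType) (X : choiceType) (K : RKHS R X)
  (d : measure_display) (T : measurableType d) (P : probability T R)
  (Xin : {fset X}) (Xout : T -> {fset X})
  (Xout_sub : forall w, (Xout w `<=` Xin)%fset)
  (Xout_ne : forall w, Xout w != fset0)
  (Xout_meas : forall S : {fset X}, measurable [set w | Xout w = S])
  (F : set (X -> R)) (HF : (F `<=` Hspace K)%classic)
  (eps : R) (Heps : 0 <= eps) (delta : R) (Hdelta : 0 < delta < 1)
  (C : {fset (X -> R)}) (HC : is_min_cover K Xin F eps C)
  (nu : R) (E : set T) (mE : measurable E)
  (Hsg : subgaussian_on K P (fun w => emp_diff_kernel K Xin (Xout w)) nu E) :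
  (P (E `&` [set w | ((2 * eps)%:E
          + (nu * Num.sqrt (2 * ln (#|` C|%fset%:R / delta)))%:E * sup_norm K F
        < ereal_sup [set (emp_diff Xin (Xout w) f)%:E | f in F])%E])
    <= delta%:E)%E.
Proof.
have [nu0 Hsg2] := Hsg.
case/andP: Hdelta => d0 d1.
case: HC => [[HCsp HCcov] _].
case: (pselect (exists f, F f)) => [[f0 Ff0] | nF]; last first.
  rewrite (_ : E `&` _ = set0) ?measure0 ?lee_fin ?ltW //.
  apply/seteqP; split => w // [_] /=.
  rewrite (_ : [set _ | f in F] = set0) ?ereal_sup0 ?ltNge ?leNye //.
  by apply/seteqP; split => y // [f Ff]; exfalso; apply: nF; exists f.
have [c0 c0C _] := HCcov f0 Ff0.
have n1 : (0 < #|` C|)%N by rewrite cardfs_gt0; apply/fset0Pn; exists c0.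
have nR0 : (#|` C|%:R : R) != 0 by rewrite pnatr_eq0 -lt0n.
have n1R : (1 : R) <= #|` C|%:R by rewrite ler1n.
have ln0 : 0 < ln (#|` C|%:R / delta).
  apply: ln_gt0; rewrite ltr_pdivlMr // mul1r; exact: lt_le_trans d1 n1R.
set t := Num.sqrt (2 * ln (#|` C|%:R / delta)).
have t0 : 0 < t by rewrite sqrtr_gt0 mulr_gt0.
have t2 : t ^+ 2 = 2 * ln (#|` C|%:R / delta) by rewrite sqr_sqrtr // ltW // mulr_gt0.
have a0 : ((Hnorm K f0)%:E <= sup_norm K F)%E by apply: ereal_sup_ubound; exists f0.
have hn0 : 0 <= Hnorm K f0 by exact: sqrtr_ge0.
move: a0; case ha: (sup_norm K F) => [r | | ] a0'; last first.
- by move: a0'; rewrite leeNy_eq.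
- rewrite (_ : E `&` _ = set0) ?measure0 ?lee_fin ?ltW //.
  apply/seteqP; split => w // [_] /=.
  rewrite gt0_muley ?lte_fin ?mulr_gt0 // addey // ltNge leey //.
have r0 : 0 <= r by rewrite lee_fin in a0'; exact: le_trans a0'.
pose B c := [set w | nu * t * r < emp_diff Xin (Xout w) c].
have mB : forall c, measurable (E `&` B c).
  move=> c; apply: measurableI => //.
  exact: (meas_of Xout_sub Xout_meas (fun S => nu * t * r < emp_diff Xin S c)).
have mA : measurable (E `&` [set w | ((2 * eps)%:E + (nu * t)%:E * r%:E
        < ereal_sup [set (emp_diff Xin (Xout w) f)%:E | f in F])%E]).
  apply: measurableI => //.
  exact: (meas_of Xout_sub Xout_meas (fun S => ((2 * eps)%:E + (nu * t)%:E * r%:E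
        < ereal_sup [set (emp_diff Xin S f)%:E | f in F])%E)).
have UB := union_bound P (s := C) (G := fun c => E `&` B c) mA mB.
apply: le_trans (UB _) _.
  move=> w [Ew]; rewrite /= => /ereal_sup_gt [y [f Ff <-]].
  rewrite -EFinM -EFinD lte_fin => hf.
  have [c cC hc] := HCcov f Ff.
  exists c => //; split => //; rewrite /B /=.
  have [h1 _] := emp_close Heps hc.
  have [_ h2] := emp_close Heps (S := Xout w)
     (fun x hx => hc x (fsubsetP (Xout_sub w) x hx)).
  rewrite /emp_diff in hf *; lra.
apply: (@le_trans _ _ (\sum_(c <- C) ((delta / #|` C|%:R)%:E))%E).
  rewrite big_seq [X in (_ <= X)%E]big_seq; apply: lee_sum => c cC.
  have [Hc Hcn] := HCsp c cC; rewrite ha lee_fin in Hcn.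
  have hsq := sqrtr_ge0 (ip K c c).
  have ipc0 := ip_ge0 Hc.
  have Hcip : ip K c c <= r ^+ 2.
    rewrite -(sqr_sqrtr ipc0); rewrite /Hnorm in Hcn; nra.
  have dn0 : 0 <= delta / #|` C|%:R by rewrite divr_ge0 // ?ltW.
  case: (eqVneq r 0) => [r00 | rn0].
    have c00 : c = fun=> 0.
      apply: (ip_eq0 Hc); apply: le_anti; rewrite ipc0 andbT.
      by move: Hcip; rewrite r00 expr0n.
    rewrite (_ : E `&` B c = set0) ?measure0 ?lee_fin //.
    apply/seteqP; split => w // [_]; rewrite /B /= c00 r00 mulr0.
    by rewrite /emp_diff /emp !big1 // !mulr0 subrr ltxx.
  have rp : 0 < r by rewrite lt_neqAle eq_sym rn0 r0.
  set lam := t / (nu * r).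
  have lam0 : 0 < lam by rewrite divr_gt0 // mulr_gt0.
  have e : lam * (nu * r) = t by rewrite /lam divfK // mulf_neq0 // gt_eqF.
  have e2 : lam * (nu * t * r) = t ^+ 2 by rewrite expr2 -{2}e; ring.
  have Hlc : Hspace K (fun x => lam * c x) by apply: HspaceZ.
  have Hint := Hsg2 _ Hlc.
  have Hnorm_l : Hnorm K (fun x => lam * c x) ^+ 2 = lam ^+ 2 * ip K c c.
    rewrite /Hnorm sqr_sqrtr ?ip_ge0 // ipZl // ipZr //.
    by rewrite expr2 mulrA.
  have Hexp : expR (nu ^+ 2 / 2 * Hnorm K (fun x => lam * c x) ^+ 2)
      <= expR (t ^+ 2 / 2).
    rewrite ler_expR Hnorm_l -e.
    have hh : 0 <= (lam * nu) ^+ 2 by exact: sqr_ge0.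
    nra.
  have mg : forall D, measurable D -> measurable_fun (U := measurable_realfun.constructive_ereal_extended__canonical__measurable_structure_SigmaRing R) D
      (fun w => (expR (ip K (fun x => lam * c x) (emp_diff_kernel K Xin (Xout w))))%:E).
    move=> D mD.
    exact: (measfun_of Xout_sub Xout_meas (U := measurable_realfun.constructive_ereal_extended__canonical__measurable_structure_SigmaRing R)
      (fun S => (expR (ip K (fun x => lam * c x) (emp_diff_kernel K Xin S)))%:E) mD).
  have Hchain : ((expR (t ^+ 2))%:E * P (E `&` B c) <= (expR (t ^+ 2 / 2))%:E)%E.
    rewrite -(integral_cst P (mB c)).
    apply: (@le_trans _ _ (\int[P]_(w in E `&` B c)
       (expR (ip K (fun x => lam * c x) (emp_diff_kernel K Xin (Xout w))))%:E)%E).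
      apply: ge0_le_integral => //.
      - by move=> w _; rewrite /= lee_fin expR_ge0.
      - exact: mg.
      move=> w [Ew Bw]; rewrite /= lee_fin ler_expR.
      rewrite ipZl //; last by have [] := ip_phi Xin (Xout w) Hc.
      have [_ ->] := ip_phi Xin (Xout w) Hc.
      rewrite -e2; rewrite ler_pM2l //; apply: ltW; exact: Bw.
    apply: (le_trans _ (le_trans Hint _)); last by rewrite lee_fin.
    by apply: ge0_subset_integral => //; exact: mg.
  have fin : P (E `&` B c) \is a fin_num.
    rewrite ge0_fin_numE ?measure_ge0 //.
    exact: le_lt_trans (probability_le1 P (mB c)) (ltry 1).
  move: Hchain; rewrite -(fineK fin) -EFinM !lee_fin.
  move: (fine (P (E `&` B c))) => p h.
  have : p <= expR (t ^+ 2 / 2) / expR (t ^+ 2).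
    by rewrite ler_pdivlMr ?expR_gt0 // mulrC.
  rewrite -expRB t2 (_ : 2 * ln (#|` C|%:R / delta) / 2 - 2 * ln (#|` C|%:R / delta)
     = - ln (#|` C|%:R / delta)); last by field.
  by rewrite expRN lnK ?posrE ?divr_gt0 ?ltr0n // invf_div.
rewrite sumEFin big_const_seq count_predT iter_addr addr0 lee_fin.
by rewrite -[X in X <= _]mulr_natr divfK.
Qed.
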